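(* Let $H$ be a linear forest and let $k\ge 1$, $n\ge 1$ be integers. Then for every complete $k$-partite graph $G$ on $n$ vertices (with parts $A_1,\dots,A_k$ partitioning the vertex set, some possibly empty), $$\mathcal{N}(H,G)\le \mathcal{N}(H,T(n,k)).$$
   Context: $\mathcal{N}(H,G)$ denotes the number of (not necessarily induced) subgraphs of $G$ isomorphic to $H$. A linear forest is a graph each of whose connected components is a path. The Turán graph $T(n,k)$ is the complete $k$-partite graph on $n$ vertices with each part of size $\lfloor n/k\rfloor$ or $\lceil n/k\rceil$. A complete $k$-partite graph with parts $A_1,\dots,A_k$ has an edge between two vertices exactly when they lie in different parts. *)

(* Defs.v *)
From mathcomp Require Import all_boot.
Set Implicit Arguments. Unset Strict Implicit. Unset Printing Implicit Defensive.

(* A simple graph on a finite type V is a symmetric irreflexive relation. *)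

Definition seq_adj (V : eqType) (s : seq V) (x y : V) : bool :=
  has (fun i => ((nth x s i == x) && (nth x s i.+1 == y))
             || ((nth x s i == y) && (nth x s i.+1 == x)))
      (iota 0 (size s).-1).

Definition is_path_on (V : finType) (e : rel V) (C : {set V}) : Prop :=
  exists s : seq V, [/\ uniq s, C =i s &
    forall x y, x \in C -> y \in C -> e x y = seq_adj s x y].

Definition linear_forest (V : finType) (e : rel V) : Prop :=
  forall x : V, is_path_on e [set y | connect e x y].

(* (W, F) is a (not necessarily induced) subgraph of G (vertex set W,
   edge set F, edges as 2-element vertex sets) isomorphic to (V, e). *)
Definition is_copy (V : finType) (e : rel V) (n : nat) (G : rel 'I_n)
    (W : {set 'I_n}) (F : {set {set 'I_n}}) : bool :=
  [forall A in F, exists x, exists y,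
      [&& x \in W, y \in W, G x y & A == [set x; y]]] &&
  [exists f : {ffun V -> 'I_n},
      [&& injectiveb f, f @: [set: V] == W &
          [forall x, forall y, e x y == ([set f x; f y] \in F)]]].

Definition Ncopies (V : finType) (e : rel V) (n : nat) (G : rel 'I_n) : nat :=
  #|[set WF : {set 'I_n} * {set {set 'I_n}} | is_copy e G WF.1 WF.2]|.

(* Complete k-partite graph with parts A_j = p^-1(j) (possibly empty). *)
Definition kpartite (n k : nat) (p : 'I_n -> 'I_k) : rel 'I_n :=
  fun x y => p x != p y.

Definition ceil_div (n k : nat) : nat := n %/ k + (~~ (k %| n)).

Definition turan_parts (n k : nat) (q : 'I_n -> 'I_k) : bool :=
  [forall j : 'I_k, (#|[set x | q x == j]| == n %/ k)
                    || (#|[set x | q x == j]| == ceil_div n k)].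

(* Main.v *)
Require Import Defs.
From mathcomp Require Import all_boot.
From mathcomp Require Import fingroup perm.
From mathcomp Require Import zify.
Set Implicit Arguments. Unset Strict Implicit. Unset Printing Implicit Defensive.
Lemma sum_fiber (T T' : finType) (A : {set T}) (B : {set T'}) (r : T -> T')
   (F : T -> nat) (G : T' -> nat) :
  (forall a, a \in A -> r a \in B) ->
  (forall b, b \in B -> \sum_(a in A | r a == b) F a = G b) ->
  \sum_(a in A) F a = \sum_(b in B) G b.
Proof.
move=> HA HB; rewrite (partition_big r (mem B)) //=.
by apply: eq_bigr => b Hb; rewrite -HB.
Qed.

Lemma sum_fiber2 (T : finType) (P : pred T) (F : T -> nat) e1 e2 :
  e1 != e2 -> P e1 -> P e2 -> (forall a, P a -> a = e1 \/ a = e2) ->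
  \sum_(a | P a) F a = F e1 + F e2.
Proof.
move=> ne P1 P2 HP.
rewrite (bigD1 e1) //= (bigD1 e2) /=; last by rewrite P2 eq_sym.
rewrite big1 ?addn0 // => a /andP [/andP [Pa na1] na2].
by case: (HP a Pa) => E; rewrite E eqxx in na1 na2.
Qed.

Lemma sum_fiber1 (T : finType) (P : pred T) (F : T -> nat) e1 :
  P e1 -> (forall a, P a -> a = e1) ->
  \sum_(a | P a) F a = F e1.
Proof.
move=> P1 HP; apply: big_pred1 => a /=; apply/idP/eqP; first exact: HP.
by move->.
Qed.

Lemma ff_arith1 x y m k :
  x ^_ m.+1 * y ^_ k + x ^_ m * y ^_ k.+1 = x ^_ m * y ^_ k * (x + y - (m + k)).
Proof.
rewrite !ffactnSr.
case: (ltnP x m) => [xm|mx]; first by rewrite ffact_small.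
case: (ltnP y k) => [yk|ky]; first by rewrite (ffact_small yk) !muln0 !mul0n.
have -> : x + y - (m + k) = (x - m) + (y - k) by lia.
by rewrite mulnDr; congr (_ + _); [rewrite mulnAC | rewrite mulnA].
Qed.

Lemma ff_arith2 x m : x ^_ m.+1 = x * x.-1 ^_ m.
Proof. exact: ffactnS. Qed.

Lemma ff_mono x y M : y < x -> x ^_ M * y ^_ M <= x.-1 ^_ M * y.+1 ^_ M.
Proof.
move=> yx; elim: M => [|M IH]; first by rewrite !ffactn0.
rewrite !ffactnSr.
rewrite mulnACA [X in _ <= X]mulnACA.
apply: leq_mul => //.
case: (ltnP y M) => yM.
  by rewrite (_ : y - M = 0) ?muln0 //; apply/eqP; rewrite subn_eq0 ltnW.
have -> : x.-1 - M = (x - M).-1 by lia.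
have -> : y.+1 - M = (y - M).+1 by lia.
set a := x - M; set b := y - M.
have ab : b < a by rewrite /a /b; lia.
nia.
Qed.
Section Coloring.
Variable V : finType.
Variable h : rel V.
Hypothesis h_sym : symmetric h.
Hypothesis h_irr : irreflexive h.

Definition proper2 (S : {set V}) (d : {ffun V -> bool}) : bool :=
  [forall x, (x \notin S) ==> ~~ d x] &&
  [forall x in S, forall y in S, h x y ==> (d x != d y)].

Definition DS (S : {set V}) := [set d | proper2 S d].

Definition Psi (S : {set V}) (x y : nat) : nat :=
  \sum_(d in DS S) x ^_ #|[set z in S | d z]| * y ^_ #|[set z in S | ~~ d z]|.

Lemma DSP (S : {set V}) (d : {ffun V -> bool}) : reflect ((forall x, x \notin S -> d x = false) /\
   (forall x y, x \in S -> y \in S -> h x y -> d x != d y)) (d \in DS S).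
Proof.
rewrite inE /proper2; apply: (iffP andP) => [[/forallP H1 /forall_inP H2]|[H1 H2]]; split.
- by move=> x xS; apply/negbTE; exact: (implyP (H1 x)).
- by move=> x y xS yS hxy; have /forall_inP := H2 x xS; move/(_ y yS)/implyP; apply.
- by apply/forallP => x; apply/implyP => xS; rewrite H1.
- by apply/forall_inP => x xS; apply/forall_inP => y yS; apply/implyP; exact: H2.
Qed.

Definition restr (S : {set V}) (d : {ffun V -> bool}) : {ffun V -> bool} :=
  [ffun x => (x \in S) && d x].

Definition upd (d : {ffun V -> bool}) (u : V) (b : bool) : {ffun V -> bool} :=
  [ffun x => if x == u then b else d x].

Lemma restr_DS (S S' : {set V}) (d : {ffun V -> bool}) : S' \subset S -> d \in DS S -> restr S' d \in DS S'.
Proof.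
move=> sub /DSP [H1 H2]; apply/DSP; split.
- by move=> x xS; rewrite ffunE (negbTE xS).
- by move=> x y xS yS hxy; rewrite !ffunE xS yS /=; apply: H2 => //; apply: (subsetP sub).
Qed.

Lemma count_U1 (S : {set V}) u (P : pred V) : u \notin S ->
  #|[set z in u |: S | P z]| = P u + #|[set z in S | P z]|.
Proof.
move=> uS.
have -> : [set z in u |: S | P z] = (if P u then [set u] else set0) :|: [set z in S | P z].
  apply/setP => z; rewrite !inE; case: (eqVneq z u) => [->|zu] /=.
    by case: (P u) => //=; rewrite ?inE ?eqxx //= (negbTE uS).
  by case: (P u); rewrite ?inE ?(negbTE zu) //.
case Pu: (P u) => /=; last by rewrite set0U.
by rewrite cardsU1 inE (negbTE uS).
Qed.

Lemma count_upd (S : {set V}) u (d : {ffun V -> bool}) b (P : bool -> bool) : u \notin S ->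
  #|[set z in S | P (upd d u b z)]| = #|[set z in S | P (d z)]|.
Proof.
move=> uS; apply: eq_card => z; rewrite !inE ffunE.
by case: (eqVneq z u) => [->|//]; rewrite (negbTE uS).
Qed.

Lemma count_upd1 (S : {set V}) u (d : {ffun V -> bool}) b : u \notin S ->
  #|[set z in S | upd d u b z]| = #|[set z in S | d z]|.
Proof.
move=> uS; apply: eq_card => z; rewrite !inE ffunE.
by case: (eqVneq z u) => [->|//]; rewrite (negbTE uS).
Qed.

Lemma card_split (S : {set V}) (d : {ffun V -> bool}) :
  #|[set z in S | d z]| + #|[set z in S | ~~ d z]| = #|S|.
Proof.
rewrite -(cardsID [set z | d z] S); congr (_ + _); apply: eq_card => z; by rewrite !inE // andbC.
Qed.

Definition formula (S : {set V}) :=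
  exists M (g : nat -> nat), forall x y, Psi S x y = x ^_ M * y ^_ M * g (x + y).

Lemma restr_upd (S' : {set V}) u (d : {ffun V -> bool}) b : u \notin S' -> d \in DS S' -> restr S' (upd d u b) = d.
Proof.
move=> uS /DSP [H1 _]; apply/ffunP => x; rewrite !ffunE.
case: (eqVneq x u) => [->|xu]; first by rewrite (negbTE uS) H1.
by case xS: (x \in S') => //=; rewrite H1 ?xS.
Qed.

Lemma restr_upd2 (S' : {set V}) u w (d : {ffun V -> bool}) b c : u \notin S' -> w \notin S' -> d \in DS S' ->
  restr S' (upd (upd d w c) u b) = d.
Proof.
move=> uS wS dS; apply/ffunP => x; rewrite !ffunE.
case xS: (x \in S') => /=.
  have xu : (x == u) = false by apply/negbTE; apply: contraNneq uS => <-.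
  have xw : (x == w) = false by apply/negbTE; apply: contraNneq wS => <-.
  by rewrite xu xw.
by case/DSP: dS => H1 _; rewrite H1 // xS.
Qed.

Lemma upd_restr (S S' : {set V}) u (d : {ffun V -> bool}) : u \notin S' -> S = u |: S' -> d \in DS S ->
  d = upd (restr S' d) u (d u).
Proof.
move=> uS eS /DSP [H1 _]; apply/ffunP => x; rewrite !ffunE.
case: (eqVneq x u) => [->//|xu].
case xS: (x \in S') => //=; by rewrite H1 // eS !inE (negbTE xu) xS.
Qed.

Lemma upd_restr2 (S S' : {set V}) u w (d : {ffun V -> bool}) : u \notin S' -> w \notin S' -> S = u |: (w |: S') -> d \in DS S ->
  d = upd (upd (restr S' d) w (d w)) u (d u).
Proof.
move=> uS wS eS /DSP [H1 _]; apply/ffunP => x; rewrite !ffunE.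
case: (eqVneq x u) => [->//|xu].
case: (eqVneq x w) => [->//|xw].
case xS: (x \in S') => //=; by rewrite H1 // eS !inE (negbTE xu) (negbTE xw) xS.
Qed.

Lemma Psi_isolated (S' : {set V}) u : u \notin S' -> (forall y, y \in S' -> ~~ h u y) ->
  forall x y, Psi (u |: S') x y = (x + y - #|S'|) * Psi S' x y.
Proof.
move=> uS' iso x y.
rewrite /Psi big_distrr /=.
apply: (sum_fiber (r := restr S')).
  by move=> a aS; apply: (restr_DS (S := u |: S')) => //; rewrite subsetUr.
move=> d' d'S; have [H1 H2] := DSP _ _ d'S.
have inS b : upd d' u b \in DS (u |: S').
  apply/DSP; split.
    move=> z zS; rewrite ffunE; case: (eqVneq z u) => [zu|zu].
      by rewrite zu setU11 in zS.
    by apply: H1; apply: contra zS => zS'; rewrite !inE zS' orbT.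
  move=> z1 z2; rewrite !inE !ffunE.
  case: (eqVneq z1 u) => [->|z1u] /=.
    case: (eqVneq z2 u) => [->|z2u] /=; first by rewrite h_irr.
    by move=> _ z2S; rewrite (negbTE (iso _ z2S)).
  case: (eqVneq z2 u) => [->|z2u] /=.
    by move=> z1S _; rewrite h_sym (negbTE (iso _ z1S)).
  exact: H2.
rewrite (sum_fiber2 _ (e1 := upd d' u true) (e2 := upd d' u false)).
- rewrite !count_U1 // !ffunE eqxx /= !count_upd // !count_upd1 // add0n add1n.
  by rewrite ff_arith1 card_split mulnC.
- by apply/eqP => /ffunP /(_ u); rewrite !ffunE eqxx.
- by rewrite inS restr_upd // eqxx.
- by rewrite inS restr_upd // eqxx.
- move=> d /andP [dS /eqP rd]; rewrite (upd_restr uS' (erefl _) dS) rd.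
  by case: (d u); [left|right].
Qed.
Lemma bneq (a b : bool) : a != b -> a = ~~ b.
Proof. by case: a; case: b. Qed.

Lemma count_U2 (S' : {set V}) u w (d : {ffun V -> bool}) b c :
  u \notin S' -> w \notin S' -> u != w ->
  #|[set z in u |: (w |: S') | upd (upd d w c) u b z]| = b + (c + #|[set z in S' | d z]|) /\
  #|[set z in u |: (w |: S') | ~~ upd (upd d w c) u b z]| = ~~ b + (~~ c + #|[set z in S' | ~~ d z]|).
Proof.
move=> uS wS uw.
have uwS : u \notin w |: S' by rewrite !inE negb_or uw uS.
rewrite !count_U1 // !ffunE eqxx eq_sym (negbTE uw) eqxx.
by rewrite !count_upd1 // !count_upd.
Qed.

Lemma term_arith x y m k (b : bool) :
  x ^_ (b + (~~ b + m)) * y ^_ (~~ b + (~~ ~~ b + k)) = x * y * (x.-1 ^_ m * y.-1 ^_ k).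
Proof.
have -> : b + (~~ b + m) = m.+1 by case: b.
have -> : ~~ b + (~~ ~~ b + k) = k.+1 by case: b.
by rewrite !ffactnS mulnACA.
Qed.

Lemma in_U2 (S' : {set V}) u w z : z \in u |: (w |: S') -> [\/ z = u, z = w | z \in S'].
Proof. by rewrite !inE => /orP [/eqP->|/orP [/eqP->|]]; [constructor 1|constructor 2|constructor 3]. Qed.

Lemma notin_U2 (S' : {set V}) u w z : u \notin S' -> w \notin S' -> z \in S' -> (z == u) = false /\ (z == w) = false.
Proof.
move=> uS wS zS; split; apply/negbTE.
  by apply: contraNneq uS => <-.
by apply: contraNneq wS => <-.
Qed.

Lemma upd2_out (S' : {set V}) u w (d : {ffun V -> bool}) b c z :
  u \notin S' -> w \notin S' -> z \in S' -> upd (upd d w c) u b z = d z.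
Proof. by move=> uS wS zS; have [e1 e2] := notin_U2 uS wS zS; rewrite !ffunE e1 e2. Qed.

Lemma upd2_norm (S' : {set V}) u w (d : {ffun V -> bool}) b c :
  d \in DS S' -> forall z, z \notin u |: (w |: S') -> upd (upd d w c) u b z = false.
Proof.
move=> /DSP [H1 _] z; rewrite !inE !negb_or => /and3P [zu zw zS].
by rewrite !ffunE (negbTE zu) (negbTE zw) H1.
Qed.

Lemma Psi_edge (S' : {set V}) u w x y : u \notin S' -> w \notin S' -> u != w ->
  (forall z, z \in S' -> ~~ h u z) -> (forall z, z \in S' -> ~~ h w z) -> h u w ->
  Psi (u |: (w |: S')) x y = 2 * (x * y * Psi S' x.-1 y.-1).
Proof.
move=> uS wS uw isu isw huw.
have uwF : (u == w) = false by apply/negbTE.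
have wuF : (w == u) = false by rewrite eq_sym; apply/negbTE.
rewrite /Psi !big_distrr /=.
apply: (sum_fiber (r := restr S')).
  by move=> a aS; apply: (restr_DS (S := u |: (w |: S'))) => //; apply/subsetP => t tS; rewrite !inE tS !orbT.
move=> d' d'S; have [H1 H2] := DSP _ _ d'S.
have inS b : upd (upd d' w (~~ b)) u b \in DS (u |: (w |: S')).
  apply/DSP; split; first exact: upd2_norm.
  move=> z1 z2 /in_U2 [->|->|z1S] /in_U2 [->|->|z2S].
  - by rewrite h_irr.
  - by move=> _; rewrite !ffunE !eqxx ?wuF ?uwF; case: b.
  - by rewrite (negbTE (isu _ z2S)).
  - by move=> _; rewrite !ffunE !eqxx ?wuF ?uwF; case: b.
  - by rewrite h_irr.
  - by rewrite (negbTE (isw _ z2S)).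
  - by rewrite h_sym (negbTE (isu _ z1S)).
  - by rewrite h_sym (negbTE (isw _ z1S)).
  - by move=> hz; rewrite !(upd2_out _ _ _ uS wS) //; apply: H2.
rewrite (sum_fiber2 _ (e1 := upd (upd d' w (~~ true)) u true) (e2 := upd (upd d' w (~~ false)) u false)).
- have [-> ->] := count_U2 d' true (~~ true) uS wS uw.
  have [-> ->] := count_U2 d' false (~~ false) uS wS uw.
  by rewrite !term_arith addnn -mul2n.
- by apply/eqP => /ffunP /(_ u); rewrite !ffunE eqxx.
- by rewrite inS restr_upd2 // eqxx.
- by rewrite inS restr_upd2 // eqxx.
- move=> d /andP [dS /eqP rd].
  rewrite (upd_restr2 uS wS (erefl _) dS) rd.
  have dw : d w = ~~ d u.
    apply: bneq; rewrite eq_sym; case/DSP: dS => _ H; apply: H => //; rewrite !inE eqxx ?orbT //.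
  by rewrite dw; case: (d u); [left|right].
Qed.

Lemma Psi_leaf (S' : {set V}) u w z x y : u \notin S' -> w \notin S' -> u != w -> z \in S' ->
  (forall t, t \in S' -> ~~ h u t) -> (forall t, t \in S' -> h w t -> t = z) -> h u w -> h w z ->
  Psi (u |: (w |: S')) x y = x * y * Psi S' x.-1 y.-1.
Proof.
move=> uS wS uw zS isu isw huw hwz.
have uwF : (u == w) = false by apply/negbTE.
have wuF : (w == u) = false by rewrite eq_sym; apply/negbTE.
rewrite /Psi !big_distrr /=.
apply: (sum_fiber (r := restr S')).
  by move=> a aS; apply: (restr_DS (S := u |: (w |: S'))) => //; apply/subsetP => t tS; rewrite !inE tS !orbT.
move=> d' d'S; have [H1 H2] := DSP _ _ d'S.
set b := d' z.
have inS : upd (upd d' w (~~ b)) u b \in DS (u |: (w |: S')).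
  apply/DSP; split; first exact: upd2_norm.
  move=> z1 z2 /in_U2 [->|->|z1S] /in_U2 [->|->|z2S].
  - by rewrite h_irr.
  - by move=> _; rewrite !ffunE !eqxx ?wuF ?uwF; case: b.
  - by rewrite (negbTE (isu _ z2S)).
  - by move=> _; rewrite !ffunE !eqxx ?wuF ?uwF; case: b.
  - by rewrite h_irr.
  - move=> /(isw _ z2S) ->; rewrite (upd2_out _ _ _ uS wS zS) !ffunE !eqxx ?wuF ?uwF.
    by rewrite /b; case: (d' z).
  - by rewrite h_sym (negbTE (isu _ z1S)).
  - rewrite h_sym => /(isw _ z1S) ->; rewrite (upd2_out _ _ _ uS wS zS) !ffunE !eqxx ?wuF ?uwF.
    by rewrite /b; case: (d' z).
  - by move=> hz; rewrite !(upd2_out _ _ _ uS wS) //; apply: H2.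
rewrite (sum_fiber1 _ (e1 := upd (upd d' w (~~ b)) u b)).
- have [-> ->] := count_U2 d' b (~~ b) uS wS uw.
  by rewrite !term_arith.
- by rewrite inS restr_upd2 // eqxx.
- move=> d /andP [dS /eqP rd].
  rewrite (upd_restr2 uS wS (erefl _) dS) rd.
  have dz : d z = b by rewrite /b -rd ffunE zS.
  case/DSP: dS => _ H.
  have dw : d w = ~~ d z.
    by apply: bneq; apply: H => //; rewrite !inE ?zS ?eqxx ?orbT.
  have du : d u = ~~ d w.
    by apply: bneq; apply: H => //; rewrite !inE ?zS ?eqxx ?orbT.
  by rewrite du dw dz negbK.
Qed.
Lemma arith_two x y M (g : nat -> nat) :
  x * y * (x.-1 ^_ M * y.-1 ^_ M * g (x.-1 + y.-1)) = x ^_ M.+1 * y ^_ M.+1 * g (x + y - 2).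
Proof.
rewrite !ffactnS; case: x => [|x]; first by rewrite !mul0n.
case: y => [|y]; first by rewrite !(muln0, mul0n).
rewrite /= (_ : x.+1 + y.+1 - 2 = x + y); last by lia.
set a := x ^_ M; set b := y ^_ M; set G := g (x + y); nia.
Qed.

Lemma Psi_set0 x y : Psi set0 x y = 1.
Proof.
rewrite /Psi (sum_fiber1 _ (e1 := [ffun _ => false])).
- have E (P : pred V) : [set z in set0 | P z] = set0 by apply/setP => z; rewrite !inE.
  by rewrite !E cards0 !ffactn0.
- apply/DSP; split => [z _|z1 z2]; first by rewrite ffunE.
  by rewrite inE.
- by move=> d /DSP [H1 _]; apply/ffunP => z; rewrite ffunE H1 // inE.
Qed.

Hypothesis leaf_ex : forall S : {set V}, S != set0 -> exists2 u, u \in S &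
  forall y1 y2, y1 \in S -> y2 \in S -> h u y1 -> h u y2 -> y1 = y2.
Hypothesis deg2 : forall w, exists a b, forall y, h w y -> y = a \/ y = b.

Lemma Psi_formula_n n : forall S : {set V}, #|S| <= n -> formula S.
Proof.
elim: n => [|n IH] S cS.
  have -> : S = set0 by apply/eqP; rewrite -cards_eq0; lia.
  by exists 0, (fun _ => 1) => x y; rewrite Psi_set0 !ffactn0.
case: (eqVneq S set0) => [->|Sne].
  by exists 0, (fun _ => 1) => x y; rewrite Psi_set0 !ffactn0.
have [u uS uni] := leaf_ex Sne.
set S1 := S :\ u.
have eS1 : S = u |: S1 by rewrite setD1K.
have uS1 : u \notin S1 by rewrite !inE eqxx.
have cS1 : #|S1| <= n by move: cS; rewrite eS1 cardsU1 uS1; lia.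
case: (boolP [exists y in S, h u y]) => [/exists_inP [w wS huw]|/exists_inP noy].
- have uw : u != w by apply: contraTneq huw => ->; rewrite h_irr.
  set S' := S1 :\ w.
  have wS1 : w \in S1 by rewrite !inE eq_sym uw wS.
  have eS : S = u |: (w |: S') by rewrite eS1 /S' setD1K.
  have wS' : w \notin S' by rewrite !inE eqxx.
  have uS' : u \notin S' by rewrite !inE eqxx andbF.
  have cS' : #|S'| <= n by move: cS1; rewrite /S' (cardsD1 w S1) wS1; lia.
  have [M [g Hg]] := IH S' cS'.
  have isu t : t \in S' -> ~~ h u t.
    move=> tS; apply/negP => hut.
    have tS0 : t \in S by rewrite eS !in_setU1 tS !orbT.
    by have E := uni _ _ tS0 wS hut huw; move: wS'; rewrite -E tS.
  have tS0 t : t \in S' -> t \in S by move=> tS; rewrite eS !in_setU1 tS !orbT.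
  case: (boolP [exists z in S, (z != u) && h w z]) => [/exists_inP [z zS /andP [zu hwz]]|/exists_inP noz].
  + have zw : z != w by apply: contraTneq hwz => ->; rewrite h_irr.
    have zS' : z \in S' by rewrite !inE zw zu zS.
    have isw t : t \in S' -> h w t -> t = z.
      move=> tS hwt.
      have [a [b Hab]] := deg2 w.
      have tu : t != u by apply: contraTneq tS => ->.
      case: (Hab u); first by rewrite h_sym.
      + move=> ua; case: (Hab z hwz) => za; first by rewrite za -ua eqxx in zu.
        by case: (Hab t hwt) => ta; [rewrite ta -ua eqxx in tu | rewrite ta za].
      + move=> ub; case: (Hab z hwz) => za; last by rewrite za -ub eqxx in zu.
        by case: (Hab t hwt) => ta; [rewrite ta za | rewrite ta -ub eqxx in tu].
    exists M.+1, (fun s => g (s - 2)) => x y.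
    by rewrite eS (Psi_leaf x y uS' wS' uw zS' isu isw huw hwz) Hg arith_two.
  + have isw t : t \in S' -> ~~ h w t.
      move=> tS; apply/negP => hwt.
      have tu : t != u by apply: contraTneq tS => ->.
      by apply: noz; exists t; [exact: tS0 | rewrite tu hwt].
    exists M.+1, (fun s => 2 * g (s - 2)) => x y.
    rewrite eS (Psi_edge x y uS' wS' uw isu isw huw) Hg arith_two.
    by rewrite mulnCA.
- have [M [g Hg]] := IH S1 cS1.
  have iso t : t \in S1 -> ~~ h u t.
    move=> tS; apply/negP => hut; apply: noy; exists t => //.
    by rewrite eS1 in_setU1 tS orbT.
  exists M, (fun s => (s - #|S1|) * g s) => x y.
  by rewrite eS1 (Psi_isolated uS1 iso) Hg mulnCA.
Qed.

Lemma Psi_mono (S : {set V}) x y : y < x -> Psi S x y <= Psi S x.-1 y.+1.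
Proof.
move=> yx; have [M [g Hg]] := Psi_formula_n (leqnn #|S|).
rewrite !Hg (_ : x.-1 + y.+1 = x + y); last by lia.
by apply: leq_mul => //; apply: ff_mono.
Qed.
End Coloring.
Section Count.
Variables (V T : finType) (b : {ffun V -> T}) (R1 R0 : {set T}) (d : {ffun V -> bool}).
Hypothesis disj : forall t, t \in R1 -> t \notin R0.

Definition Rof (c : bool) := if c then R1 else R0.

Definition Aset (S : {set V}) : {set {ffun V -> T}} :=
  [set f : {ffun V -> T} | [forall x, (x \notin S) ==> (f x == b x)] &&
     [forall x in S, f x \in Rof (d x)] &&
     [forall x in S, forall y in S, (f x == f y) ==> (x == y)]].

Lemma AsetP (S : {set V}) (f : {ffun V -> T}) : reflect [/\ (forall x, x \notin S -> f x = b x),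
    (forall x, x \in S -> f x \in Rof (d x)) &
    (forall x y, x \in S -> y \in S -> f x = f y -> x = y)] (f \in Aset S).
Proof.
rewrite inE; apply: (iffP andP) => [[/andP [/forallP H1 /forall_inP H2] /forall_inP H3]|[H1 H2 H3]].
  split.
  - by move=> x xS; apply/eqP; exact: (implyP (H1 x) xS).
  - exact: H2.
  - by move=> x y xS yS fxy; have /forall_inP := H3 x xS; move/(_ y yS)/implyP/(_ (introT eqP fxy))/eqP.
split; first (apply/andP; split).
- by apply/forallP => x; apply/implyP => xS; rewrite H1.
- by apply/forall_inP.
- by apply/forall_inP => x xS; apply/forall_inP => y yS; apply/implyP => /eqP /H3 ->.
Qed.

Definition ext (f : {ffun V -> T}) (u : V) (t : T) : {ffun V -> T} :=
  [ffun x => if x == u then t else f x].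


Lemma Rof_eq (c c' : bool) t : t \in Rof c -> t \in Rof c' -> c = c'.
Proof.
case: c; case: c' => //= t1 t0.
  by have := disj t1; rewrite t0.
by have := disj t0; rewrite t1.
Qed.

Lemma cnt_step (S' : {set V}) u : u \notin S' ->
  #|Aset (u |: S')| = #|Aset S'| * (#|Rof (d u)| - #|[set z in S' | d z == d u]|).
Proof.
move=> uS.
rewrite -[#|Aset (u |: S')|]sum1_card.
rewrite (sum_fiber (B := Aset S') (r := fun f => ext f u (b u)) (G := fun _ => #|Rof (d u)| - #|[set z in S' | d z == d u]|)).
  by rewrite sum_nat_const.
- move=> f /AsetP [H1 H2 H3]; apply/AsetP; split.
  + move=> x xS; rewrite ffunE; case: (eqVneq x u) => [->//|xu].
    by apply: H1; rewrite in_setU1 (negbTE xu).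
  + move=> x xS; rewrite ffunE; case: (eqVneq x u) => [xu|xu]; first by move: uS; rewrite -xu xS.
    by apply: H2; rewrite in_setU1 xS orbT.
  + move=> x y xS yS; rewrite !ffunE.
    case: (eqVneq x u) => [xu|xu]; first by move: uS; rewrite -xu xS.
    case: (eqVneq y u) => [yu|yu]; first by move: uS; rewrite -yu yS.
    by apply: H3; rewrite in_setU1 ?xS ?yS orbT.
move=> f' /AsetP [H1 H2 H3].
rewrite sum1_card.
set D := Rof (d u) :\: f' @: S'.
rewrite (_ : #|_| = #|[set f in Aset (u |: S') | ext f u (b u) == f']|); last first.
  by apply: eq_card => f; rewrite inE.
have -> : [set f in Aset (u |: S') | ext f u (b u) == f'] = (ext f' u) @: D.
  apply/setP => f; rewrite inE; apply/andP/imsetP.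
  - move=> [/AsetP [G1 G2 G3] /eqP E]; exists (f u).
      rewrite !inE G2 ?setU11 // andbT; apply/imsetP => -[z zS fz].
      have zu : z != u by apply: contraNneq uS => <-.
      have : f z = f u by rewrite -E ffunE (negbTE zu) in fz; rewrite fz.
      have zS1 : z \in u |: S' by rewrite in_setU1 zS orbT.
      move/(G3 _ _ zS1 (setU11 _ _)) => zu'.
      by rewrite zu' eqxx in zu.
    apply/ffunP => x; rewrite ffunE; case: (eqVneq x u) => [->//|xu].
    by rewrite -E ffunE (negbTE xu).
  - move=> [t tD ->]; move: tD; rewrite in_setD => /andP [tn tR]; split.
      apply/AsetP; split.
      + move=> x; rewrite in_setU1 negb_or ffunE => /andP [xu xS]; rewrite (negbTE xu); exact: H1.
      + move=> x; rewrite in_setU1 ffunE; case: (eqVneq x u) => [->//|xu] /= xS; exact: H2.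
      + move=> x y; rewrite !in_setU1 !ffunE.
        case: (eqVneq x u) => [->|xu]; case: (eqVneq y u) => [->|yu] //= xS yS.
        * by move=> E; rewrite E imset_f in tn.
        * by move=> E; rewrite -E imset_f in tn.
        * exact: H3.
    apply/eqP/ffunP => x; rewrite !ffunE; case: (eqVneq x u) => [->|//].
    by rewrite H1.
rewrite card_imset; last first.
  by move=> t1 t2 /ffunP /(_ u); rewrite !ffunE eqxx.
rewrite /D cardsD; congr (_ - _).
have -> : Rof (d u) :&: f' @: S' = f' @: [set z in S' | d z == d u].
  apply/setP => t; rewrite inE; apply/andP/imsetP.
  - move=> [tR /imsetP [z zS tz]]; subst t; exists z => //.
    by rewrite inE zS /=; apply/eqP; apply: (Rof_eq (H2 z zS) tR).
  - move=> [z]; rewrite inE => /andP [zS /eqP dz] ->; split; last exact: imset_f.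
    by rewrite -dz; exact: H2.
rewrite card_in_imset // => x y; rewrite !inE => /andP [xS _] /andP [yS _]; exact: H3.
Qed.

Lemma Aset_set0 : #|Aset set0| = 1.
Proof.
rewrite -(cards1 b); apply: eq_card => f; rewrite in_set1.
apply/idP/eqP.
  by move=> /AsetP [H1 _ _]; apply/ffunP => x; rewrite H1 // inE.
by move->; apply/AsetP; split => // x; rewrite inE.
Qed.

Lemma Aset_card_n n : forall S : {set V}, #|S| <= n ->
  #|Aset S| = #|R1| ^_ #|[set z in S | d z]| * #|R0| ^_ #|[set z in S | ~~ d z]|.
Proof.
elim: n => [|n IH] S cS.
  have -> : S = set0 by apply/eqP; rewrite -cards_eq0 -leqn0.
  have E (P : pred V) : [set z in set0 | P z] = set0 by apply/setP => z; rewrite !inE.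
  by rewrite Aset_set0 !E cards0 !ffactn0.
case: (set_0Vmem S) => [->|[u uS]].
  have E (P : pred V) : [set z in set0 | P z] = set0 by apply/setP => z; rewrite !inE.
  by rewrite Aset_set0 !E cards0 !ffactn0.
have eS : S = u |: (S :\ u) by rewrite setD1K.
have uS' : u \notin S :\ u by rewrite !inE eqxx.
have cS' : #|S :\ u| <= n by move: cS; rewrite {1}eS cardsU1 uS'; lia.
rewrite eS cnt_step // IH // !count_U1 //.
case du: (d u) => /=.
  have -> : [set z in S :\ u | d z == true] = [set z in S :\ u | d z].
    by apply/setP => z; rewrite !inE eqb_id.
  by rewrite add1n add0n ffactnSr mulnAC.
have -> : [set z in S :\ u | d z == false] = [set z in S :\ u | ~~ d z].
  by apply/setP => z; rewrite !inE eqbF_neg.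
by rewrite add1n add0n ffactnSr mulnA.
Qed.

Lemma Aset_card (S : {set V}) :
  #|Aset S| = #|R1| ^_ #|[set z in S | d z]| * #|R0| ^_ #|[set z in S | ~~ d z]|.
Proof. exact: Aset_card_n. Qed.
End Count.
Section Move.
Variable V : finType.
Variable h : rel V.
Hypothesis h_sym : symmetric h.
Hypothesis h_irr : irreflexive h.
Variables n k : nat.

Definition Emb (G : rel 'I_n) : {set {ffun V -> 'I_n}} :=
  [set f : {ffun V -> 'I_n} | injectiveb f && [forall x, forall y, h x y ==> G (f x) (f y)]].

Lemma EmbP (G : rel 'I_n) (f : {ffun V -> 'I_n}) :
  reflect (injective f /\ forall x y, h x y -> G (f x) (f y)) (f \in Emb G).
Proof.
rewrite inE; apply: (iffP andP) => [[/injectiveP H1 /forallP H2]|[H1 H2]]; split => //.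
- by move=> x y hxy; move/forallP: (H2 x) => /(_ y) /implyP; apply.
- exact/injectiveP.
- by apply/forallP => x; apply/forallP => y; apply/implyP; apply: H2.
Qed.

Definition oof (U : {set 'I_n}) (f : {ffun V -> 'I_n}) : {ffun V -> option 'I_n} :=
  [ffun x => if f x \in U then None else Some (f x)].

Section CountO.
Variables (p0 : 'I_n -> 'I_k) (i j : 'I_k) (U X0 : {set 'I_n}).
Hypothesis ij : i != j.
Hypothesis HU : forall z, (z \in U) = (p0 z == i) || (p0 z == j).
Hypothesis HX : forall z, (z \in X0) = (p0 z == i).
Variable f0 : {ffun V -> 'I_n}.
Let S := [set x | f0 x \in U].
Hypothesis OV1 : forall x y, x \notin S -> y \notin S -> f0 x = f0 y -> x = y.
Hypothesis OV2 : forall x y, x \notin S -> y \notin S -> h x y -> p0 (f0 x) != p0 (f0 y).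

Lemma X0U z : z \in X0 -> z \in U.
Proof. by rewrite HX HU => ->. Qed.

Lemma count_o :
  #|[set f in Emb (kpartite p0) | oof U f == oof U f0]| = Psi h S #|X0| #|U :\: X0|.
Proof.
have ijF : (i == j) = false by apply/negbTE.
have jiF : (j == i) = false by rewrite eq_sym; apply/negbTE.
rewrite -sum1_card /Psi.
apply: (sum_fiber (r := fun f : {ffun V -> 'I_n} => [ffun x => (x \in S) && (f x \in X0)])).
  move=> f; rewrite inE => /andP [/EmbP [finj fe] /eqP fo].
  apply/DSP; split; first by move=> x xS; rewrite ffunE (negbTE xS).
  move=> x y xS yS hxy; rewrite !ffunE xS yS /=.
  have fxU : f x \in U.
    by move: xS (congr1 (fun g : {ffun V -> option 'I_n} => g x) fo); rewrite inE !ffunE => ->; case: (f x \in U).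
  have fyU : f y \in U.
    by move: yS (congr1 (fun g : {ffun V -> option 'I_n} => g y) fo); rewrite inE !ffunE => ->; case: (f y \in U).
  have := fe x y hxy; rewrite /kpartite; move: fxU fyU; rewrite !HU !HX.
  by case/orP => /eqP -> ; case/orP => /eqP ->; rewrite ?eqxx ?ijF ?jiF.
move=> d dS; rewrite sum1_card.
rewrite -(Aset_card f0 (R1 := X0) (R0 := U :\: X0)); last first.
  by move=> t tX; rewrite !inE tX.
apply: eq_card => f.
have [dN dP] := DSP _ _ _ dS.
have f0U x : (f0 x \in U) = (x \in S) by rewrite inE.
apply/idP/idP.
- move=> /andP [Hf /eqP fd]; move: Hf; rewrite inE => /andP [/EmbP [finj fe] /eqP fo].
  have fx x : f x \in U = (x \in S).
    move: (congr1 (fun g : {ffun V -> option 'I_n} => g x) fo); rewrite inE !ffunE.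
    by case: (f x \in U); case: (f0 x \in U).
  apply/AsetP; split.
  + move=> x xS; move: (congr1 (fun g : {ffun V -> option 'I_n} => g x) fo); rewrite !ffunE.
    rewrite fx f0U (negbTE xS); by case.
  + move=> x xS; rewrite -fd ffunE xS /=; case fX: (f x \in X0) => //=.
    by rewrite inE fX fx xS.
  + by move=> x y _ _; apply: finj.
- move=> /AsetP [A1 A2 A3].
  have fU x : x \in S -> f x \in U.
    move=> xS; have := A2 x xS; rewrite /Rof; case: (d x); first exact: X0U.
    by rewrite inE => /andP [].
  have fX x : x \in S -> (f x \in X0) = d x.
    move=> xS; have := A2 x xS; rewrite /Rof; case: (d x) => //.
    by rewrite inE => /andP [/negbTE].
  apply/andP; split; first (rewrite inE; apply/andP; split).
  + apply/EmbP; split.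
    * move=> x y; case xS: (x \in S); case yS: (y \in S).
      -- exact: A3.
      -- move=> E; have := fU x xS; rewrite E A1 ?yS // f0U yS //.
      -- move=> E; have := fU y yS; rewrite -E A1 ?xS // f0U xS //.
      -- by rewrite !A1 ?xS ?yS // => /OV1; apply; rewrite ?xS ?yS.
    * move=> x y hxy; rewrite /kpartite.
      case xS: (x \in S); case yS: (y \in S).
      -- have := dP x y xS yS hxy; rewrite -!fX //.
         have := fU x xS; have := fU y yS; rewrite !HU !HX.
         by case/orP => /eqP -> ; case/orP => /eqP ->; rewrite ?eqxx ?ijF ?jiF.
      -- rewrite (A1 y) ?yS //; have := fU x xS; have := f0U y; rewrite yS !HU => /negbT.
         rewrite negb_or => /andP [n1 n2] /orP [] /eqP ->; by rewrite eq_sym.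
      -- rewrite (A1 x) ?xS //; have := fU y yS; have := f0U x; rewrite xS !HU => /negbT.
         rewrite negb_or => /andP [n1 n2] /orP [] /eqP ->; by [].
      -- by rewrite !A1 ?xS ?yS //; apply: OV2; rewrite ?xS ?yS.
  + apply/eqP/ffunP => x; rewrite !ffunE.
    case xS: (x \in S).
      by rewrite fU ?xS // f0U xS.
    by rewrite (A1 x) //; rewrite xS.
  + apply/eqP/ffunP => x; rewrite ffunE.
    case xS: (x \in S) => /=; first by rewrite fX.
    by rewrite dN ?xS.
Qed.
End CountO.
Hypothesis leaf_ex : forall S : {set V}, S != set0 -> exists2 u, u \in S &
  forall y1 y2, y1 \in S -> y2 \in S -> h u y1 -> h u y2 -> y1 = y2.
Hypothesis deg2 : forall w, exists a b, forall y, h w y -> y = a \/ y = b.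

Lemma Emb_sum (p0 : 'I_n -> 'I_k) (U : {set 'I_n}) :
  #|Emb (kpartite p0)| = \sum_(o in [set: {ffun V -> option 'I_n}]) #|[set f in Emb (kpartite p0) | oof U f == o]|.
Proof.
rewrite -sum1_card; apply: (sum_fiber (r := oof U)) => [f _|o _]; first by rewrite inE.
by rewrite sum1_card; apply: eq_card => f; rewrite inE.
Qed.

Lemma move_le (p p' : 'I_n -> 'I_k) (i j : 'I_k) (v : 'I_n) :
  i != j -> p v = i -> p' v = j -> (forall x, x != v -> p' x = p x) ->
  #|[set z | p z == j]| < #|[set z | p z == i]| ->
  #|Emb (kpartite p)| <= #|Emb (kpartite p')|.
Proof.
move=> ij pv p'v pp' card_lt.
set U := [set z | (p z == i) || (p z == j)].
set X := [set z | p z == i].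
have HU z : (z \in U) = (p z == i) || (p z == j) by rewrite inE.
have HX z : (z \in X) = (p z == i) by rewrite inE.
have vU : v \in U by rewrite HU pv eqxx.
have vX : v \in X by rewrite HX pv eqxx.
have HU' z : (z \in U) = (p' z == i) || (p' z == j).
  case: (eqVneq z v) => [->|zv]; first by rewrite vU p'v eqxx orbT.
  by rewrite pp' // HU.
have HX' z : (z \in X :\ v) = (p' z == i).
  rewrite in_setD1; case: (eqVneq z v) => [->|zv] /=; first by rewrite p'v eq_sym (negbTE ij).
  by rewrite pp' // HX.
rewrite (Emb_sum p U) (Emb_sum p' U); apply: leq_sum => o _.
case: (set_0Vmem [set f in Emb (kpartite p) | oof U f == o]) => [->|[f0]]; first by rewrite cards0.
rewrite inE => /andP [/EmbP [f0inj f0e] /eqP f0o].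
rewrite -f0o.
set S := [set x | f0 x \in U].
have OV1 x y : x \notin S -> y \notin S -> f0 x = f0 y -> x = y by move=> _ _; apply: f0inj.
have OV2 x y : x \notin S -> y \notin S -> h x y -> p (f0 x) != p (f0 y) by move=> _ _; apply: f0e.
have OV2' x y : x \notin S -> y \notin S -> h x y -> p' (f0 x) != p' (f0 y).
  move=> xS yS hxy; have nv z : z \notin S -> f0 z != v.
    by move=> zS; apply: contraNneq zS => E; rewrite inE E vU.
  by rewrite !pp' ?nv //; apply: OV2.
rewrite (count_o ij HU HX OV1 OV2) (count_o ij HU' HX' OV1 OV2').
have -> : #|X :\ v| = #|X|.-1 by rewrite (cardsD1 v X) vX.
have -> : U :\: (X :\ v) = v |: (U :\: X).
  apply/setP => z; rewrite !inE; case: (eqVneq z v) => [->|zv] //=.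
  by rewrite pv eqxx.
have vUX : v \notin U :\: X by rewrite in_setD vX.
rewrite cardsU1 vUX add1n.
apply: Psi_mono => //.
have -> : U :\: X = [set z | p z == j].
  apply/setP => z; rewrite !inE; case: (eqVneq (p z) i) => [->|] /=; first by rewrite (negbTE ij).
  by [].
by [].
Qed.
End Move.
Section Struct.
Variable V : finType.
Variable h : rel V.
Hypothesis h_sym : symmetric h.
Hypothesis h_irr : irreflexive h.
Hypothesis h_lf : linear_forest h.

Lemma adjP (s : seq V) a b : uniq s -> a \in s -> seq_adj s a b ->
  b = nth a s (index a s).+1 \/ (0 < index a s /\ b = nth a s (index a s).-1).
Proof.
move=> us aS /hasP [i]; rewrite mem_iota add0n => /andP [_ ilt].
have il : i < size s by move: ilt; case: (size s) => //= m; lia.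
have il1 : i.+1 < size s by move: ilt; case: (size s) => //= m; lia.
case/orP => /andP [/eqP e1 /eqP e2].
  left; have -> : index a s = i by rewrite -{1}e1 index_uniq.
  by rewrite e2.
right; have -> : index a s = i.+1 by rewrite -{1}e2 index_uniq.
by split => //=; rewrite e1.
Qed.

Lemma comp_nb x y : h x y -> y \in [set z | connect h x z].
Proof. by move=> hxy; rewrite inE; apply: connect1. Qed.

Lemma deg2 w : exists a b, forall y, h w y -> y = a \/ y = b.
Proof.
have [s [us Cs Hs]] := h_lf w.
exists (nth w s (index w s).+1), (nth w s (index w s).-1) => y hwy.
have wC : w \in [set z | connect h w z] by rewrite inE connect0.
have yC := comp_nb hwy.
have ws : w \in s by rewrite -Cs.
move: hwy; rewrite Hs // => /(adjP us ws) [->|[_ ->]]; [left|right] => //.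
Qed.

Lemma leaf_ex (S : {set V}) : S != set0 -> exists2 u, u \in S &
  forall y1 y2, y1 \in S -> y2 \in S -> h u y1 -> h u y2 -> y1 = y2.
Proof.
case/set0Pn => x0 x0S.
have [s [us Cs Hs]] := h_lf x0.
set C := [set z | connect h x0 z] in Cs Hs.
have x0s : x0 \in s by rewrite -Cs inE connect0.
have hasS : has (mem S) s by apply/hasP; exists x0.
set j := find (mem S) s.
have js : j < size s by rewrite -has_find.
set u := nth x0 s j.
have uS : u \in S by have := nth_find x0 hasS.
have us' : u \in s by rewrite mem_nth.
have uC : u \in C by rewrite Cs.
have iu : index u s = j by rewrite index_uniq.
exists u => // y1 y2 y1S y2S h1 h2.
have nb y : y \in S -> h u y -> y = nth u s j.+1.
  move=> yS huy.
  have yC : y \in C.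
    by move: uC; rewrite !inE => cu; apply: connect_trans cu (connect1 huy).
  move: huy; rewrite Hs // => /(adjP us us') [|[j0 E]]; first by rewrite iu.
  exfalso; rewrite iu in j0 E; rewrite E in yS.
  have jlt : j.-1 < j by lia.
  have := before_find x0 jlt; rewrite /= (set_nth_default u) ?yS //; lia.
by rewrite (nb _ y1S h1) (nb _ y2S h2).
Qed.
End Struct.
Lemma set2_eq (T : finType) (a b c d : T) : [set a; b] = [set c; d] ->
  (a = c /\ b = d) \/ (a = d /\ b = c).
Proof.
move=> E.
have ha : a \in [set c; d] by rewrite -E set21.
have hb : b \in [set c; d] by rewrite -E set22.
have hc : c \in [set a; b] by rewrite E set21.
have hd : d \in [set a; b] by rewrite E set22.
move: ha hb hc hd; rewrite !inE => /orP[]/eqP ha /orP[]/eqP hb /orP[]/eqP hc /orP[]/eqP hd; subst; by [left | right].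
Qed.

Section Copies.
Variable V : finType.
Variable h : rel V.
Hypothesis h_sym : symmetric h.
Hypothesis h_irr : irreflexive h.
Variable n : nat.
Variable G : rel 'I_n.
Hypothesis G_sym : symmetric G.

Definition edges_of (f : {ffun V -> 'I_n}) : {set {set 'I_n}} :=
  [set [set f xy.1; f xy.2] | xy in [set xy : V * V | h xy.1 xy.2]].
Definition key (f : {ffun V -> 'I_n}) := (f @: [set: V], edges_of f).
Definition copies := [set WF : {set 'I_n} * {set {set 'I_n}} | is_copy h G WF.1 WF.2].
Definition Aut := [set s : {ffun V -> V} | injectiveb s && [forall x, forall y, h x y == h (s x) (s y)]].

Lemma edges_mem (f : {ffun V -> 'I_n}) : injective f -> forall x y, ([set f x; f y] \in edges_of f) = h x y.
Proof.
move=> finj x y; apply/imsetP/idP.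
- move=> [[a b]]; rewrite inE /= => hab /set2_eq [[/finj -> /finj ->]|[/finj -> /finj ->]] //.
  by rewrite h_sym.
- by move=> hxy; exists (x, y); rewrite ?inE.
Qed.

Lemma key_copy f : f \in Emb h G -> key f \in copies.
Proof.
move=> /EmbP [finj fe]; rewrite inE /is_copy /=; apply/andP; split.
  apply/forall_inP => A /imsetP [[x y]]; rewrite inE /= => hxy ->.
  apply/existsP; exists (f x); apply/existsP; exists (f y).
  by rewrite !imset_f ?inE // fe //=.
apply/existsP; exists f; rewrite eqxx; apply/and3P; split => //; first exact/injectiveP.
by apply/forallP => x; apply/forallP => y; rewrite edges_mem.
Qed.

Lemma copy_key c : c \in copies -> exists2 f, f \in Emb h G & key f = c.
Proof.
case: c => W F; rewrite inE /is_copy /= => /andP [/forall_inP H1 /existsP [f /and3P [/injectiveP finj /eqP fim /forallP fe]]].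
have fe' x y : h x y = ([set f x; f y] \in F) by apply/eqP; move/forallP: (fe x) => /(_ y).
exists f.
  apply/EmbP; split => // x y; rewrite fe' => /H1 /existsP [a /existsP [b /and4P [_ _ Gab /eqP E]]].
  by case: (set2_eq E) => [[-> ->]|[-> ->]] //; rewrite G_sym.
rewrite /key fim; congr (_, _); apply/setP => A; apply/imsetP/idP.
  by move=> [[x y]]; rewrite inE /= => hxy ->; rewrite -fe'.
move=> AF; have := H1 _ AF => /existsP [a /existsP [b /and4P [aW bW _ /eqP E]]].
rewrite -fim in aW bW.
case/imsetP: aW => x _ ax; case/imsetP: bW => y _ bydef.
exists (x, y); rewrite ?inE /= ?fe' -?ax -?bydef -?E //.
Qed.

Lemma Aut_surj s : s \in Aut -> forall a, exists x, s x = a.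
Proof.
rewrite inE => /andP [/injectiveP sinj _] a.
have : a \in s @: [set: V].
  have -> : s @: [set: V] = [set: V].
    by apply/eqP; rewrite eqEcard subsetT (card_imset _ sinj) leqnn.
  by rewrite inE.
by case/imsetP => x _ ->; exists x.
Qed.

Lemma fiber_card c : c \in copies -> #|[set f in Emb h G | key f == c]| = #|Aut|.
Proof.
move=> /copy_key [f0 f0E f0k]; subst c.
have [f0inj f0e] := EmbP _ _ _ f0E.
have -> : [set f in Emb h G | key f == key f0] = [set [ffun x => f0 (s x)] | s : {ffun V -> V} in Aut].
  apply/setP => f; rewrite inE; apply/andP/imsetP.
  - move=> [/EmbP [finj fe] /eqP [fim fed]].
    have ex x : exists y, f0 y == f x.
      have : f x \in f @: [set: V] by rewrite imset_f.
      by rewrite fim => /imsetP [y _ ->]; exists y.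
    pose s := [ffun x => odflt x [pick y | f0 y == f x]].
    have sE x : f0 (s x) = f x.
      rewrite ffunE; case: pickP => [y /eqP //|none].
      by case: (ex x) => y; rewrite none.
    exists s.
      rewrite inE; apply/andP; split.
        by apply/injectiveP => x y E; apply: finj; rewrite -!sE E.
      apply/forallP => x; apply/forallP => y.
      by rewrite -(edges_mem finj) fed -!sE (edges_mem f0inj).
    by apply/ffunP => x; rewrite ffunE sE.
  - move=> [s sA ->]; move: (sA); rewrite inE => /andP [/injectiveP sinj /forallP sh].
    have shE x y : h x y = h (s x) (s y) by apply/eqP; move/forallP: (sh x) => /(_ y).
    split.
      apply/EmbP; split.
        by move=> x y; rewrite !ffunE => /f0inj /sinj.
      by move=> x y hxy; rewrite !ffunE; apply: f0e; rewrite -shE.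
    apply/eqP; rewrite /key; congr (_, _).
      apply/setP => t; apply/imsetP/imsetP.
        by move=> [x _ ->]; exists (s x); rewrite ?ffunE.
      move=> [a _ ->]; have [x sx] := Aut_surj sA a.
      by exists x; rewrite ?ffunE ?sx.
    apply/setP => A; apply/imsetP/imsetP.
      move=> [[x y]]; rewrite inE /= => hxy ->; exists (s x, s y); rewrite ?inE /= -?shE ?ffunE //.
    move=> [[a b]]; rewrite inE /= => hab ->.
    have [x sx] := Aut_surj sA a; have [y sy] := Aut_surj sA b.
    exists (x, y); first by rewrite inE /= shE sx sy.
    by rewrite /= !ffunE sx sy.
rewrite card_imset // => s1 s2 E; apply/ffunP => x.
by apply: f0inj; move/ffunP: E => /(_ x); rewrite !ffunE.
Qed.

Lemma Emb_copies : #|Emb h G| = Ncopies h G * #|Aut|.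
Proof.
rewrite -sum1_card (sum_fiber (B := copies) (r := key) (G := fun _ => #|Aut|)).
- by rewrite sum_nat_const.
- by move=> f; apply: key_copy.
- move=> c cC; rewrite -(fiber_card cC) sum1_card; apply: eq_card => f; rewrite inE.
  done.
Qed.

Lemma Aut_gt0 : 0 < #|Aut|.
Proof.
apply/card_gt0P; exists [ffun x => x]; rewrite inE; apply/andP; split.
  by apply/injectiveP => x y; rewrite !ffunE.
by apply/forallP => x; apply/forallP => y; rewrite !ffunE.
Qed.
End Copies.
Section Final.
Variable V : finType.
Variable h : rel V.
Hypothesis h_sym : symmetric h.
Hypothesis h_irr : irreflexive h.
Hypothesis h_lf : linear_forest h.
Variables n k : nat.

Definition E (p : 'I_n -> 'I_k) := #|Emb h (kpartite p)|.
Definition sz (p : 'I_n -> 'I_k) (j : 'I_k) := #|[set z | p z == j]|.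

Lemma E_ext p p' : (forall x, p x = p' x) -> E p = E p'.
Proof.
move=> H; apply: eq_card => f; rewrite !inE /kpartite.
by apply: congr1; apply: eq_forallb => x; apply: eq_forallb => y; rewrite !H.
Qed.

Lemma E_perm p (s : {perm 'I_n}) : E (fun x => p (s x)) = E p.
Proof.
rewrite /E -(card_imset _ (_ : injective (fun f : {ffun V -> 'I_n} => [ffun x => s (f x)]))); last first.
  by move=> f g /ffunP E1; apply/ffunP => x; have := E1 x; rewrite !ffunE => /perm_inj.
apply: eq_card => g; apply/imsetP/idP.
- move=> [f /EmbP [finj fe] ->]; apply/EmbP; split.
    by move=> x y; rewrite !ffunE => /perm_inj /finj.
  by move=> x y hxy; rewrite !ffunE; apply: fe.
- move=> /EmbP [ginj ge]; exists [ffun x => (s^-1)%g (g x)].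
    apply/EmbP; split.
      by move=> x y; rewrite !ffunE => /perm_inj /ginj.
    by move=> x y hxy; rewrite !ffunE /kpartite !permKV; apply: ge.
  by apply/ffunP => x; rewrite !ffunE permKV.
Qed.

Lemma sum_sz p : \sum_(j < k) sz p j = n.
Proof.
rewrite -[RHS](card_ord n) -sum1_card (partition_big p predT) //=.
by apply: eq_bigr => j _; rewrite /sz -sum1_card; apply: eq_bigl => z; rewrite inE.
Qed.

Lemma sum_lt_ex (F G : 'I_k -> nat) : \sum_(j < k) F j = \sum_(j < k) G j ->
  (exists j, F j != G j) -> exists i, G i < F i.
Proof.
move=> Es [j0 ne].
suff /existsP [i Hi] : [exists i, G i < F i] by exists i.
apply: contraT; rewrite negb_exists => /forallP H.
have le j : F j <= G j by rewrite leqNgt; apply: H.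
have lt0 : F j0 < G j0 by rewrite ltn_neqAle ne le.
have : \sum_(j < k) F j < \sum_(j < k) G j.
  rewrite (bigD1 j0) //= [X in _ < X](bigD1 j0) //=.
  by rewrite -addSn; apply: leq_add => //; apply: leq_sum => j _; exact: le.
by rewrite Es ltnn.
Qed.

Definition mu (p q : 'I_n -> 'I_k) := \sum_(j < k) ((sz p j - sz q j) + (sz q j - sz p j)).
Definition wrong (p q : 'I_n -> 'I_k) := #|[set x | p x != q x]|.

Lemma wrong_le p q : wrong p q <= n.
Proof. by rewrite /wrong -[X in _ <= X](card_ord n) max_card. Qed.

Lemma main_ineq (q : 'I_n -> 'I_k) : turan_parts q -> forall N p, mu p q * n.+1 + wrong p q < N -> E p <= E q.
Proof.
move=> hq; elim=> [//|N IH] p lt.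
case: (boolP [exists j, sz p j != sz q j]) => [/existsP ex|].
- have [i ip] := sum_lt_ex (etrans (sum_sz p) (esym (sum_sz q))) ex.
  have [j jq] : exists j, sz p j < sz q j.
    apply: sum_lt_ex; first by rewrite !sum_sz.
    by case: ex => j ne; exists j; rewrite eq_sym.
  have turan l : (sz q l == n %/ k) || (sz q l == ceil_div n k) by move/forallP: hq => /(_ l).
  have ceil_le : ceil_div n k <= n %/ k + 1 by rewrite /ceil_div leq_add2l; case: (~~ _).
  have ceil_ge : n %/ k <= ceil_div n k by rewrite /ceil_div leq_addr.
  have ji : sz p j < sz p i.
    move: (turan i) (turan j) ceil_le ceil_ge; set m := n %/ k; set c := ceil_div n k.
    move=> /orP [] /eqP ti /orP [] /eqP tj; lia.
  have ij : i != j by apply: contraTneq ji => ->; rewrite ltnn.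
  have : 0 < sz p i by lia.
  rewrite /sz card_gt0 => /set0Pn [v]; rewrite inE => /eqP pv.
  pose p' := fun x => if x == v then j else p x.
  have p'v : p' v = j by rewrite /p' eqxx.
  have pp' x : x != v -> p' x = p x by move=> xv; rewrite /p' (negbTE xv).
  apply: (leq_trans (move_le h_sym h_irr (@leaf_ex _ _ h_lf) (@deg2 _ _ h_lf) ij pv p'v pp' ji)).
  apply: (IH p').
  have szi : sz p' i = (sz p i).-1.
    rewrite /sz (cardsD1 v [set z | p z == i]) inE pv eqxx add1n /=.
    apply: eq_card => z; rewrite !inE /p'; case: (eqVneq z v) => [->|] //=.
    by rewrite eq_sym (negbTE ij).
  have szj : sz p' j = (sz p j).+1.
    have vn : v \notin [set z | p z == j] by rewrite inE pv.
    rewrite /sz; have -> : [set z | p' z == j] = v |: [set z | p z == j].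
      by apply/setP => z; rewrite !inE /p'; case: (eqVneq z v) => [->|] //=; rewrite eqxx.
    by rewrite cardsU1 vn.
  have szl l : l != i -> l != j -> sz p' l = sz p l.
    move=> li lj; apply: eq_card => z; rewrite !inE /p'; case: (eqVneq z v) => [->|] //=.
    by rewrite pv eq_sym (negbTE lj) eq_sym (negbTE li).
  have mu_eq : mu p' q + 2 = mu p q.
    have split3 (F : 'I_k -> nat) : \sum_(l < k) F l = F i + (F j + \sum_(l < k | (l != i) && (l != j)) F l).
      by rewrite (bigD1 i) //= (bigD1 j) //= eq_sym.
    rewrite /mu !split3.
    have -> : \sum_(l < k | (l != i) && (l != j)) (sz p' l - sz q l + (sz q l - sz p' l)) =
              \sum_(l < k | (l != i) && (l != j)) (sz p l - sz q l + (sz q l - sz p l)).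
      by apply: eq_bigr => l /andP [li lj]; rewrite szl.
    rewrite szi szj; lia.
  have w1 := wrong_le p' q.
  move: lt; rewrite -mu_eq; nia.
- rewrite negb_exists => /forallP eqsz.
  have eqsz' l : sz p l = sz q l by apply/eqP; move: (eqsz l); rewrite negbK.
  case: (set_0Vmem [set x | p x != q x]) => [e0|[v]].
    rewrite (E_ext (p' := q)) // => x; apply/eqP; apply: contraT => ne.
    have : x \in [set x | p x != q x] by rewrite inE.
    by rewrite e0 inE.
  rewrite inE => pvq.
  set j := q v.
  have [w pw qw] : exists2 w, p w == j & q w != j.
    suff /existsP [w /andP [pw qw]] : [exists w, (p w == j) && (q w != j)] by exists w.
    apply: contraT; rewrite negb_exists => /forallP H.
    have sub : [set z | p z == j] \subset [set z | q z == j].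
      by apply/subsetP => z; rewrite !inE => pz; move: (H z); rewrite pz /= negbK.
    have : [set z | p z == j] = [set z | q z == j].
      by apply/eqP; rewrite eqEcard sub /= -/(sz q j) -/(sz p j) eqsz'.
    by move/setP/(_ v); rewrite !inE eqxx => /eqP pv'; rewrite pv' eqxx in pvq.
  have vw : v != w by apply: contraNneq qw => <-; rewrite /j eqxx.
  pose s := tperm v w.
  pose p' := fun x => p (s x).
  rewrite -(E_perm p s); apply: (IH p').
  have szE l : sz p' l = sz p l.
    rewrite /sz -(card_imset _ (@perm_inj _ s)); apply: eq_card => z.
    apply/imsetP/idP.
      by move=> [y]; rewrite !inE => py ->.
    by rewrite inE => pz; exists ((s^-1)%g z); rewrite ?inE /p' permKV.
  have muE : mu p' q = mu p q by apply: eq_bigr => l _; rewrite szE.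
  have wl : wrong p' q < wrong p q.
    have sub : [set x | p' x != q x] \subset [set x | p x != q x] :\ v.
      apply/subsetP => x; rewrite !inE /p' /s.
      case: (eqVneq x v) => [->|xv]; first by rewrite tpermL (eqP pw) eqxx.
      case: (eqVneq x w) => [->|xw]; first by rewrite tpermR => _; rewrite (eqP pw) eq_sym.
      by rewrite tpermD // eq_sym.
    apply: (leq_trans (n := #|[set x | p x != q x] :\ v|.+1)).
      by rewrite ltnS; apply: subset_leq_card.
    by rewrite /wrong (cardsD1 v [set x | p x != q x]) inE pvq.
  rewrite muE; move: lt; lia.
Qed.

Theorem final (q : 'I_n -> 'I_k) (p : 'I_n -> 'I_k) : turan_parts q ->
  Ncopies h (kpartite p) <= Ncopies h (kpartite q).
Proof.
move=> hq.
have Gs (r : 'I_n -> 'I_k) : symmetric (kpartite r) by move=> x y; rewrite /kpartite eq_sym.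
have := main_ineq hq (leqnn (mu p q * n.+1 + wrong p q).+1) => /=.
rewrite /E (Emb_copies h_sym (Gs p)) (Emb_copies h_sym (Gs q)).
by rewrite leq_pmul2r // Aut_gt0.
Qed.
End Final.

Theorem theorem3 (V : finType) (h : rel V)
    (h_sym : symmetric h) (h_irr : irreflexive h) (h_lf : linear_forest h)
    (k n : nat) (hk : 1 <= k) (hn : 1 <= n)
    (p q : 'I_n -> 'I_k) (hq : turan_parts q) :
  Ncopies h (kpartite p) <= Ncopies h (kpartite q).
Proof.
exact: (final h_sym h_irr h_lf p hq).
Qed.
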